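(* Identify Kashiwara's crystal $B(\infty)$ with its polyhedral realization $\mathcal{B}(\infty)$ (equipped with the bicrystal structure described in the context), so that the Kashiwara–Park extended crystal $\widehat{B}(\infty)$ and the set $\widehat{\mathcal{B}}(\infty)$ are the same set. Then the maps $\widehat{\rm wt}$, $\widehat{\varepsilon}_{(i,k)}$, $\widetilde{E}_{(i,k)}$, $\widetilde{F}_{(i,k)}$ of the Kashiwara–Park extended crystal coincide, respectively, with the combinatorially defined maps $\widehat{\rm wt}$, $\widehat{\varepsilon}_{(i,k)}$, $\widetilde{E}_{(i,k)}$, $\widetilde{F}_{(i,k)}$ on $\widehat{\mathcal{B}}(\infty)$.
   Context: Let $\mathfrak{g}$ be a finite-dimensional simple Lie algebra of type $A_n$, $B_n$ or $D_n$ with index set $I=\{1,\dots,n\}$, and let $\iota_0=(\dots,n,\dots,1,n,\dots,1)$. The polyhedral realization $\mathcal{B}(\infty)\subset\mathbb{Z}_+^\infty$ is the image of $B(\infty)$ under the Kashiwara embedding for $\iota_0$; its points are written $b=(b_{s,t})$, where $b_{s,t}$ is the coordinate at the $s$-th occurrence of $t$ in $\iota_0$, $x_{s,t}$ are the coordinate functions, ${\bf e}_{s,t}$ the standard basis vectors (set to $0$ outside the relevant finite index set $\mathcal{I}_n^X$), and ${\bf v}(s,t)={\bf e}_{s,t}-{\bf e}_{s-1,t}$. Put $\beta_{s,t}=x_{s,t}+\sum_{k>t}\langle h_t,\alpha_k\rangle x_{s,k}+\sum_{k<t}\langle h_t,\alpha_k\rangle x_{s+1,k}+x_{s+1,t}$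 and $\beta^*_{s,t}=x_{s-1,t}+\sum_{k>t}\langle h_t,\alpha_k\rangle x_{s-1,k}+\sum_{k<t}\langle h_t,\alpha_k\rangle x_{s,k}+x_{s,t}$. For each $i$ there are tableaux $T_i$ (a single row with entries $T_i(1,t)=\beta_{t,i}$, of length $n+1-i$, $n$, $n-1$ in types $A_n,B_n,D_n$) and $T_i^*$ (a single row $T_i^*(1,t)=\beta^*_{t,i+1-t}$, $1\le t\le i$, for $i\le n$ in type $A$, $i\le n-1$ in type $B$, $i\le n-2$ in type $D$; for the remaining $i$ a staircase tableau: in type $B_n$, $T_n^*$ has shape $(n,n-1,\dots,1)$ with $T_n^*(s,t)=2\beta^*_{s+t-1,n-t}$ for $t\ge2$ and $T_n^*(s,1)=\beta^*_{s,n}$; in type $D_n$, $T_{n-1}^*$ has shape $(n-1,\dots,1)$ with $T_{n-1}^*(s,t)=\beta^*_{s+t-1,n-t}$ for $t\ge2$, $T_{n-1}^*(s,1)=\beta^*_{s,n-1}$ for $s$ odd and $\beta^*_{s,n}$ for $s$ even, and $T_n^*$ obtained by swapping $n-1$ and $n$ in the first column). For a cell $(s,t)$, $\mathcal{I}_T(s,t)$ denotes the index $(a,b)$ of the $\beta_{a,b}$ or $\beta^*_{a,b}$ in that cell. $\Pi_i$ is the set of nonempty partitions inside the shape of $T_i$, $\Pi_i^*$ the set of nonempty strict partitions inside the shape of $T_i^*$. For $\lambda=(l)\in\Pi_i$ let $\Gamma_\lambda=\sum_{s=l}^{|\eta|}\beta_{s,i}$ ($\eta$ the shape of $T_i$),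 and for $\mu\in\Pi_i^*$ let $\Gamma^*_\mu=\sum_{(s,t)\in\mu}T_i^*(s,t)$. The bicrystal structure on $\mathcal{B}(\infty)$ is: ${\rm wt}(b)=-\sum b_{s,t}\alpha_t$; $\varepsilon_i(b)=\max_{\lambda\in\Pi_i}\Gamma_\lambda(b)$, $\varepsilon_i^*(b)=\max_{\mu\in\Pi_i^*}\Gamma^*_\mu(b)$; with $m_i,M_i$ (resp. $m_i^*,M_i^*$) the minimal and maximal partitions attaining the maximum, $\widetilde{f}_i(b)=b+\sum_{(s,t)\in m_i}{\bf v}(\mathcal{I}_{T_i}(s,t))$, $\widetilde{e}_i(b)=b-\sum_{(s,t)\in M_i}{\bf v}(\mathcal{I}_{T_i}(s,t))$ (or ${\bf 0}$ if $\varepsilon_i(b)=0$), and similarly $\widetilde{f}_i^*,\widetilde{e}_i^*$ using $m_i^*,M_i^*,T_i^*$. (This bicrystal is shown in the paper to be isomorphic to Kashiwara's bicrystal $B(\infty)$ with its $*$-crystal structure.) Kashiwara–Park extended crystal: $\widehat{B}(\infty)$ is the set of ${\bf b}=(b^{(k)})_{k\in\mathbb{Z}}$ with $b^{(k)}\in B(\infty)$ and $b^{(k)}={\bf 1}$ for all but finitely many $k$, with $\widehat{\rm wt}({\bf b})=\sum_t(-1)^t{\rm wt}(b^{(t)})$, $\widehat{\varepsilon}_{(i,k)}({\bf b})=\varepsilon_i(b^{(k)})-\varepsilon_i^*(b^{(k+1)})$, $\widetilde{F}_{(i,k)}$ applying $\widetilde{f}_i$ to $b^{(k)}$ if $\widehat{\varepsilon}_{(i,k)}({\bf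 b})\ge0$ and $\widetilde{e}_i^*$ to $b^{(k+1)}$ otherwise, and $\widetilde{E}_{(i,k)}$ applying $\widetilde{e}_i$ to $b^{(k)}$ if $\widehat{\varepsilon}_{(i,k)}({\bf b})>0$ and $\widetilde{f}_i^*$ to $b^{(k+1)}$ otherwise. Combinatorial version: $\widehat{\mathcal{B}}(\infty)$ is the same kind of sequence set with entries in $\mathcal{B}(\infty)$. Let $\widehat{\Pi}_i=\Pi_i\cup\{\mu^*:\mu\in\Pi_i^*\}$ ordered by: $\lambda\le\mu^*$ always, $\lambda\le\lambda'$ iff $\lambda\subseteq\lambda'$, $\mu^*\le\nu^*$ iff $\mu\supseteq\nu$. Put $\widehat{\Gamma}^{(k)}_\lambda({\bf b})=\Gamma_\lambda(b^{(k)})$ and $\widehat{\Gamma}^{(k)}_{\mu^*}({\bf b})=\Gamma^*_\mu(b^{(k+1)})$; let $\widehat{m}_{(i,k)}({\bf b})$, $\widehat{M}_{(i,k)}({\bf b})$ be the minimal and maximal $\gamma\in\widehat{\Pi}_i$ attaining $\max_\gamma\widehat{\Gamma}^{(k)}_\gamma({\bf b})$. Define $\widehat{\rm wt}({\bf b})=\sum_t(-1)^t{\rm wt}(b^{(t)})$, $\widehat{\varepsilon}_{(i,k)}({\bf b})=\max_{\lambda\in\Pi_i}\widehat{\Gamma}^{(k)}_\lambda({\bf b})-\max_{\mu\in\Pi_i^*}\widehat{\Gamma}^{(k)}_{\mu^*}({\bf b})$, $\widetilde{E}_{(i,k)}({\bf b})={\bf b}-\sum_{(s,t)\in\lambda}{\bf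 v}(\mathcal{I}_{T_i}(s,t))^{(k)}$ if $\widehat{M}_{(i,k)}({\bf b})=\lambda$ is unstarred and ${\bf b}-\sum_{(s,t)\in\mu}{\bf v}(\mathcal{I}_{T_i^*}(s,t))^{(k+1)}$ if $\widehat{M}_{(i,k)}({\bf b})=\mu^*$, and $\widetilde{F}_{(i,k)}$ likewise with $+$ and $\widehat{m}_{(i,k)}$ (the superscript $(k)$ meaning the vector is placed in the $k$-th component). *)

(* Defs.v *)
From mathcomp Require Import all_boot all_order all_algebra.
Set Implicit Arguments. Unset Strict Implicit. Unset Printing Implicit Defensive.
Import Order.TTheory GRing.Theory Num.Theory.
Local Open Scope ring_scope.

Inductive ctype := TA | TB | TD.

Definition admissible (X : ctype) (n : nat) : bool :=
  match X with TA => (1 <= n)%N | TB => (2 <= n)%N | TD => (4 <= n)%N end.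

(* Cartan integers <h_t, alpha_k> (B_n: alpha_n short, <h_n,alpha_{n-1}> = -2;
   D_n: n-2 joined to n-1 and to n) *)
Definition cartan (X : ctype) (n t k : nat) : int :=
  if t == k then 2 else
  match X with
  | TA => if (t == k.+1) || (k == t.+1) then -1 else 0
  | TB => if (t == n) && (k == n.-1) then -2
          else if (t == k.+1) || (k == t.+1) then -1 else 0
  | TD => if ((t == n) && (k == (n - 2)%N)) || ((k == n) && (t == (n - 2)%N)) then -1
          else if [&& (t == k.+1) || (k == t.+1), (t < n)%N & (k < n)%N] then -1 else 0
  end.

(* number of occurrences of t in iota_0 : coordinates (s,t), 1 <= s <= len t *)
Definition len (X : ctype) (n t : nat) : nat :=
  match X with TA => (n.+1 - t)%N | TB => n | TD => n.-1 end.

Definition inI (X : ctype) (n s t : nat) : bool :=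
  (1 <= t <= n)%N && (1 <= s <= len X n t)%N.

(* points of Z^oo: b s t = b_{s,t} *)
Definition vec := nat -> nat -> int.
Definition vzero : vec := fun _ _ => 0.
Definition vadd (b c : vec) : vec := fun s t => b s t + c s t.
Definition vopp (b : vec) : vec := fun s t => - b s t.
Definition vsum (l : seq vec) : vec := fun s t => \sum_(x <- l) x s t.

Definition evec (X : ctype) (n s t : nat) : vec :=
  fun s' t' => if [&& s' == s, t' == t & inI X n s t] then 1 else 0.
Definition vv (X : ctype) (n : nat) (p : nat * nat) : vec :=
  fun s' t' => evec X n p.1 p.2 s' t' - evec X n p.1.-1 p.2 s' t'.

Definition beta (X : ctype) (n : nat) (b : vec) (s t : nat) : int :=
  b s t + \sum_(k <- iota t.+1 (n - t)) cartan X n t k * b s k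
        + \sum_(k <- iota 1 t.-1) cartan X n t k * b s.+1 k + b s.+1 t.

Definition betas (X : ctype) (n : nat) (b : vec) (s t : nat) : int :=
  b s.-1 t + \sum_(k <- iota t.+1 (n - t)) cartan X n t k * b s.-1 k
           + \sum_(k <- iota 1 t.-1) cartan X n t k * b s k + b s t.

Definition maxover {T : Type} (s : seq T) (f : T -> int) : int :=
  match s with
  | [::] => 0
  | x :: s' => foldr (fun y m => Num.max (f y) m) (f x) s'
  end.
Definition argmaxers {T : Type} (s : seq T) (f : T -> int) : seq T :=
  [seq x <- s | f x == maxover s f].
Definition least {T : Type} (d : T) (le : T -> T -> bool) (s : seq T) : T :=
  nth d s (find (fun x => all (le x) s) s).
Definition greatest {T : Type} (d : T) (le : T -> T -> bool) (s : seq T) : T :=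
  nth d s (find (fun x => all (fun y => le y x) s) s).

(* a partition is a seq of row lengths; its cells (row, column), 1-indexed *)
Definition cells (mu : seq nat) : seq (nat * nat) :=
  flatten [seq [seq (r.+1, c.+1) | c <- iota 0 (nth 0%N mu r)] | r <- iota 0 (size mu)].
Definition incl (mu nu : seq nat) : bool :=
  all (fun j => (nth 0%N mu j <= nth 0%N nu j)%N) (iota 0 (size mu)).

(* Pi_i : partitions (l) inside the single row T_i of length len X n i *)
Definition Pi (X : ctype) (n i : nat) : seq nat := iota 1 (len X n i).
Definition Gam (X : ctype) (n i : nat) (b : vec) (l : nat) : int :=
  \sum_(s <- iota l (len X n i - l).+1) beta X n b s i.
(* index of the beta in cell (1,t) of T_i *)
Definition Tidx (i : nat) (c : nat * nat) : nat * nat := (c.2, i).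

Definition eps (X : ctype) (n i : nat) (b : vec) : int := maxover (Pi X n i) (Gam X n i b).
Definition mi (X : ctype) (n i : nat) (b : vec) : nat :=
  least 0%N (fun x y => (x <= y)%N) (argmaxers (Pi X n i) (Gam X n i b)).
Definition Mi (X : ctype) (n i : nat) (b : vec) : nat :=
  greatest 0%N (fun x y => (x <= y)%N) (argmaxers (Pi X n i) (Gam X n i b)).
Definition ftil (X : ctype) (n i : nat) (b : vec) : vec :=
  vadd b (vsum [seq vv X n (Tidx i c) | c <- cells [:: mi X n i b]]).
(* None stands for the element 0 *)
Definition etil (X : ctype) (n i : nat) (b : vec) : option vec :=
  if eps X n i b == 0 then None
  else Some (vadd b (vopp (vsum [seq vv X n (Tidx i c) | c <- cells [:: Mi X n i b]]))).

Fixpoint subseqs (s : seq nat) : seq (seq nat) :=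
  match s with
  | [::] => [:: [::]]
  | x :: s' => [seq x :: u | u <- subseqs s'] ++ subseqs s'
  end.

Definition isStair (X : ctype) (n i : nat) : bool :=
  match X with TA => false | TB => i == n | TD => (i == n.-1) || (i == n) end.
Definition stsize (X : ctype) (n : nat) : nat :=
  match X with TB => n | _ => n.-1 end.

(* Pi_i^* : nonempty strict partitions inside the shape of T_i^* *)
Definition Pis (X : ctype) (n i : nat) : seq (seq nat) :=
  if isStair X n i then [seq mu <- subseqs (rev (iota 1 (stsize X n))) | mu != [::]]
  else [seq [:: l] | l <- iota 1 i].

(* index I_{T_i^*}(s,t) of the beta^* in cell (s,t) of T_i^* *)
Definition Tsidx (X : ctype) (n i : nat) (c : nat * nat) : nat * nat :=
  let s := c.1 in let t := c.2 in
  if ~~ isStair X n i then (t, (i.+1 - t)%N) else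
  match X with
  | TB => if t == 1%N then (s, n) else ((s + t).-1, (n.+1 - t)%N)
  | TD => if t == 1%N then (s, if odd s == (i == n.-1) then n.-1 else n)
          else ((s + t).-1, (n - t)%N)
  | TA => (t, (i.+1 - t)%N)
  end.
Definition Tscoef (X : ctype) (n i : nat) (c : nat * nat) : int :=
  match X with
  | TB => if isStair X n i && (1 < c.2)%N then 2 else 1
  | _ => 1
  end.

Definition Gams (X : ctype) (n i : nat) (b : vec) (mu : seq nat) : int :=
  \sum_(c <- cells mu) Tscoef X n i c * betas X n b (Tsidx X n i c).1 (Tsidx X n i c).2.

Definition epss (X : ctype) (n i : nat) (b : vec) : int := maxover (Pis X n i) (Gams X n i b).
Definition msi (X : ctype) (n i : nat) (b : vec) : seq nat :=
  least [::] incl (argmaxers (Pis X n i) (Gams X n i b)).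
Definition Msi (X : ctype) (n i : nat) (b : vec) : seq nat :=
  greatest [::] incl (argmaxers (Pis X n i) (Gams X n i b)).
Definition fstil (X : ctype) (n i : nat) (b : vec) : vec :=
  vadd b (vsum [seq vv X n (Tsidx X n i c) | c <- cells (msi X n i b)]).
Definition estil (X : ctype) (n i : nat) (b : vec) : option vec :=
  if epss X n i b == 0 then None
  else Some (vadd b (vopp (vsum [seq vv X n (Tsidx X n i c) | c <- cells (Msi X n i b)]))).

(* weight: wt(b) = - sum b_{s,t} alpha_t, as the coefficient function t |-> . *)
Definition wt (X : ctype) (n : nat) (b : vec) : nat -> int :=
  fun t => - \sum_(s <- iota 1 (len X n t)) b s t.

(* B(oo) (polyhedral realization) = the image of B(oo) under the Kashiwara
   embedding = the vectors obtained from 0 (= image of 1) by the f~_i *)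
Inductive Binf (X : ctype) (n : nat) : vec -> Prop :=
| Binf0 : Binf X n vzero
| BinfF (i : nat) (b : vec) : (1 <= i <= n)%N -> Binf X n b -> Binf X n (ftil X n i b).

(* an element of the extended crystal: (b^(k))_{k in Z} *)
Definition hvec := int -> vec.
Definition upd (bh : hvec) (k : int) (x : vec) : hvec :=
  fun k' => if k' == k then x else bh k'.

(* weight sums are over the window [-N, N] containing the support *)
Definition sign_int (k : int) : int := (-1) ^+ `|k|%N.
Definition window (N : nat) : seq int := [seq (j%:Z - N%:Z) | j <- iota 0 (N.*2.+1)].

Definition KP_wt (X : ctype) (n N : nat) (bh : hvec) : nat -> int :=
  fun t => \sum_(k <- window N) sign_int k * wt X n (bh k) t.
Definition KP_eps (X : ctype) (n i : nat) (k : int) (bh : hvec) : int :=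
  eps X n i (bh k) - epss X n i (bh (k + 1)).
Definition KP_F (X : ctype) (n i : nat) (k : int) (bh : hvec) : option hvec :=
  if 0 <= KP_eps X n i k bh then Some (upd bh k (ftil X n i (bh k)))
  else omap (upd bh (k + 1)) (estil X n i (bh (k + 1))).
Definition KP_E (X : ctype) (n i : nat) (k : int) (bh : hvec) : option hvec :=
  if 0 < KP_eps X n i k bh then omap (upd bh k) (etil X n i (bh k))
  else Some (upd bh (k + 1) (fstil X n i (bh (k + 1)))).

(* combinatorial extended crystal: widehat Pi_i = Pi_i (inl) + Pi_i^* (inr) *)
Definition Pihat (X : ctype) (n i : nat) : seq (nat + seq nat) :=
  [seq inl l | l <- Pi X n i] ++ [seq inr mu | mu <- Pis X n i].
Definition lehat (g h : nat + seq nat) : bool :=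
  match g, h with
  | inl l, inl l' => (l <= l')%N
  | inl _, inr _ => true
  | inr _, inl _ => false
  | inr mu, inr nu => incl nu mu
  end.
Definition Gamhat (X : ctype) (n i : nat) (k : int) (bh : hvec) (g : nat + seq nat) : int :=
  match g with
  | inl l => Gam X n i (bh k) l
  | inr mu => Gams X n i (bh (k + 1)) mu
  end.
Definition mhat (X : ctype) (n i : nat) (k : int) (bh : hvec) : nat + seq nat :=
  least (inr [::]) lehat (argmaxers (Pihat X n i) (Gamhat X n i k bh)).
Definition Mhat (X : ctype) (n i : nat) (k : int) (bh : hvec) : nat + seq nat :=
  greatest (inr [::]) lehat (argmaxers (Pihat X n i) (Gamhat X n i k bh)).

Definition comb_wt (X : ctype) (n N : nat) (bh : hvec) : nat -> int :=
  fun t => \sum_(k <- window N) sign_int k * wt X n (bh k) t.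
Definition comb_eps (X : ctype) (n i : nat) (k : int) (bh : hvec) : int :=
  maxover (Pi X n i) (fun l => Gamhat X n i k bh (inl l))
  - maxover (Pis X n i) (fun mu => Gamhat X n i k bh (inr mu)).
Definition comb_E (X : ctype) (n i : nat) (k : int) (bh : hvec) : hvec :=
  match Mhat X n i k bh with
  | inl l => upd bh k (vadd (bh k) (vopp (vsum [seq vv X n (Tidx i c) | c <- cells [:: l]])))
  | inr mu => upd bh (k + 1)
                (vadd (bh (k + 1)) (vsum [seq vv X n (Tsidx X n i c) | c <- cells mu]))
  end.
Definition comb_F (X : ctype) (n i : nat) (k : int) (bh : hvec) : hvec :=
  match mhat X n i k bh with
  | inl l => upd bh k (vadd (bh k) (vsum [seq vv X n (Tidx i c) | c <- cells [:: l]]))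
  | inr mu => upd bh (k + 1)
                (vadd (bh (k + 1)) (vopp (vsum [seq vv X n (Tsidx X n i c) | c <- cells mu])))
  end.

(* Main.v *)
Require Import Defs.
From mathcomp Require Import all_boot all_order all_algebra zify.
Import Order.TTheory GRing.Theory Num.Theory.
Local Open Scope ring_scope.
Set Implicit Arguments. Unset Strict Implicit.

Section Gen.
Variable T : eqType.

Lemma foldr_max_ge (f : T -> int) (a : int) (s : seq T) :
  a <= foldr (fun y m => Num.max (f y) m) a s /\
  (forall x, x \in s -> f x <= foldr (fun y m => Num.max (f y) m) a s).
Proof.
elim: s => [|y s [IH1 IH2]] /=; first by split=> // x.
split; first by rewrite le_max IH1 orbT.
move=> x; rewrite inE le_max => /orP [/eqP->|/IH2->]; rewrite ?lexx ?orbT //.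
Qed.

Lemma foldr_max_att (f : T -> int) (a : int) (s : seq T) :
  foldr (fun y m => Num.max (f y) m) a s = a \/
  exists2 x, x \in s & f x = foldr (fun y m => Num.max (f y) m) a s.
Proof.
elim: s => [|y s IH] /=; first by left.
set m := foldr _ _ _ in IH *.
have [H|H] : Num.max (f y) m = f y \/ Num.max (f y) m = m.
  rewrite /Num.max /Num.Def.maxr; case: ifP; auto.
- right; exists y; rewrite ?inE ?eqxx //.
- rewrite H; case: IH => [->|[x xs fx]]; [by left|right; exists x => //].
  by rewrite inE xs orbT.
Qed.

Lemma maxover_ge (s : seq T) (f : T -> int) x : x \in s -> f x <= maxover s f.
Proof.
case: s => [//|y s]; rewrite inE /= => /orP [/eqP->|xs].
- by case: (foldr_max_ge f (f y) s).
- by case: (foldr_max_ge f (f y) s) => _ /(_ x xs).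
Qed.

Lemma maxover_att (s : seq T) (f : T -> int) : s != [::] ->
  exists2 x, x \in s & f x = maxover s f.
Proof.
case: s => [//|y s] _ /=.
case: (foldr_max_att f (f y) s) => [->|[x xs fx]].
- by exists y; rewrite ?inE ?eqxx.
- by exists x; rewrite // inE xs orbT.
Qed.

Lemma maxover_eq (s : seq T) (f : T -> int) m : s != [::] ->
  (forall x, x \in s -> f x <= m) -> (exists2 x, x \in s & f x = m) ->
  maxover s f = m.
Proof.
move=> sn H1 [x xs fx]; case: (maxover_att f sn) => y ys fy.
have := H1 y ys; have := maxover_ge f xs; lia.
Qed.

Lemma argmaxers_nil (s : seq T) (f : T -> int) : s != [::] -> argmaxers s f != [::].
Proof.
move=> sn; case: (maxover_att f sn) => x xs fx.
rewrite /argmaxers -size_eq0 size_filter -lt0n -has_count.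
by apply/hasP; exists x => //; rewrite fx.
Qed.
End Gen.

Lemma nth_map_d (A B : Type) (f : A -> B) (x0 : A) s j :
  nth (f x0) (map f s) j = f (nth x0 s j).
Proof.
case: (ltnP j (size s)) => H; first by rewrite (nth_map x0).
by rewrite !nth_default ?size_map.
Qed.

Lemma has_min_nat (L : seq nat) : L != [::] -> has (fun x => all (fun y => x <= y)%N L) L.
Proof.
move=> Ln; apply/hasP.
have [x xL xmin] : exists2 x, x \in L & forall y, y \in L -> (x <= y)%N.
  elim: L Ln => [//|a L IH] _.
  case: (altP (L =P [::])) => [->|Ln].
  - by exists a; rewrite ?inE // => y; rewrite inE => /eqP->.
  - case: (IH Ln) => x xL xm.
    case: (leqP a x) => ax.
    + exists a; rewrite ?inE ?eqxx // => y; rewrite inE => /orP [/eqP->//|/xm]; lia.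
    + exists x; rewrite ?inE ?xL ?orbT // => y; rewrite inE => /orP [/eqP->|/xm//]; lia.
by exists x => //; apply/allP.
Qed.

Lemma has_max_nat (L : seq nat) : L != [::] -> has (fun x => all (fun y => y <= x)%N L) L.
Proof.
move=> Ln; apply/hasP.
have [x xL xmin] : exists2 x, x \in L & forall y, y \in L -> (y <= x)%N.
  elim: L Ln => [//|a L IH] _.
  case: (altP (L =P [::])) => [->|Ln].
  - by exists a; rewrite ?inE // => y; rewrite inE => /eqP->.
  - case: (IH Ln) => x xL xm.
    case: (leqP x a) => ax.
    + exists a; rewrite ?inE ?eqxx // => y; rewrite inE => /orP [/eqP->//|/xm]; lia.
    + exists x; rewrite ?inE ?xL ?orbT // => y; rewrite inE => /orP [/eqP->|/xm//]; lia.
by exists x => //; apply/allP.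
Qed.

Lemma G1 (L : seq nat) (R : seq (seq nat)) : L != [::] ->
  least (inr [::]) lehat (map inl L ++ map inr R) = inl (least 0%N (fun x y => (x <= y)%N) L).
Proof.
move=> Ln; rewrite /least find_cat.
have E : forall x, all (lehat (inl x)) (map inl L ++ map inr R) = all (fun y => x <= y)%N L.
  move=> x; rewrite all_cat !all_map.
  have -> : all (preim inr (lehat (inl x))) R by apply/allP.
  by rewrite andbT; apply: eq_all.
have Hh : has (fun x => all (lehat x) (map inl L ++ map inr R)) (map inl L).
  by rewrite has_map (eq_has E) has_min_nat.
have Hs := Hh; rewrite has_find in Hs.
rewrite Hh nth_cat Hs find_map (eq_find E) (nth_map 0%N) //.
by rewrite -has_find has_min_nat.
Qed.

Lemma G2 (L : seq nat) : L != [::] ->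
  greatest (inr [::]) lehat (map inl L ++ map inr [::]) = inl (greatest 0%N (fun x y => (x <= y)%N) L).
Proof.
move=> Ln; rewrite cats0 /greatest find_map.
have E : forall x, preim inl (fun x => all (fun y => lehat y x) (map inl L)) x = all (fun y => y <= x)%N L.
  by move=> x /=; rewrite all_map; apply: eq_all.
rewrite (eq_find E) (nth_map 0%N) // -has_find has_max_nat //.
Qed.

Lemma G3 (L : seq nat) (R : seq (seq nat)) : R != [::] ->
  greatest (inr [::]) lehat (map inl L ++ map inr R) = inr (least [::] incl R).
Proof.
move=> Rn; rewrite /greatest /least find_cat.
have -> : has (fun x => all (fun y => lehat y x) (map inl L ++ map inr R)) (map inl L) = false.
  apply/negbTE/hasPn => x /mapP [l _ ->]; rewrite all_cat !all_map.
  case: R Rn => [//|r R] _ /=; by rewrite andbF.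
rewrite nth_cat size_map ltnNge leq_addr /= addKn find_map.
have E : forall mu, preim inr (fun x => all (fun y => lehat y x) (map inl L ++ map inr R)) mu = all (incl mu) R.
  move=> mu /=; rewrite all_cat !all_map.
  have -> : all (preim inl (fun y => lehat y (inr mu))) L by apply/allP.
  by [].
by rewrite (eq_find E) nth_map_d.
Qed.

Lemma G4 (R : seq (seq nat)) :
  least (inr [::]) lehat (map inl [::] ++ map inr R) = inr (greatest [::] incl R).
Proof.
rewrite /= /least /greatest find_map.
have E : forall mu, preim inr (fun x => all (lehat x) (map inr R)) mu = all (fun y => incl y mu) R.
  by move=> mu /=; rewrite all_map.
by rewrite (eq_find E) nth_map_d.
Qed.


Lemma subseqs_self (s : seq nat) : s \in subseqs s.
Proof. elim: s => [|x s IH] //=; by rewrite mem_cat map_f. Qed.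

Lemma Pi_nil X n i : admissible X n -> (1 <= i <= n)%N -> Pi X n i != [::].
Proof.
move=> HX /andP [h1 h2]; rewrite /Pi -size_eq0 size_iota.
case: X HX => /= HX; lia.
Qed.

Lemma Pis_nil X n i : admissible X n -> (1 <= i <= n)%N -> Pis X n i != [::].
Proof.
move=> HX /andP [h1 h2]; rewrite /Pis; case: ifP => hs.
- rewrite -size_eq0 size_filter -lt0n -has_count; apply/hasP.
  exists (rev (iota 1 (stsize X n))); first exact: subseqs_self.
  rewrite -size_eq0 size_rev size_iota; case: X HX hs => //= HX hs; lia.
- rewrite -size_eq0 size_map size_iota; lia.
Qed.

Lemma filter_nil_lt (T : eqType) (s : seq T) (f : T -> int) A B :
  (forall x, x \in s -> f x <= B) -> B < A -> [seq x <- s | f x == A] = [::].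
Proof.
move=> H hlt; rewrite (@eq_in_filter _ _ pred0) ?filter_pred0 // => x xs /=.
by apply/negbTE; have := H x xs; lia.
Qed.

Lemma mleft (a b c : int) : a <= b -> a <= Num.max b c. Proof. lia. Qed.
Lemma mright (a b c : int) : a <= c -> a <= Num.max b c. Proof. lia. Qed.
Lemma mr (a b : int) : a <= b -> b = Num.max a b. Proof. lia. Qed.
Lemma ml (a b : int) : b < a -> a = Num.max a b. Proof. lia. Qed.

Lemma argmax_hat X n i k bh : Pi X n i != [::] -> Pis X n i != [::] ->
  argmaxers (Pihat X n i) (Gamhat X n i k bh) =
  map inl [seq l <- Pi X n i | Gam X n i (bh k) l ==
       Num.max (eps X n i (bh k)) (epss X n i (bh (k+1)))] ++
  map inr [seq mu <- Pis X n i | Gams X n i (bh (k+1)) mu ==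
       Num.max (eps X n i (bh k)) (epss X n i (bh (k+1)))].
Proof.
move=> P1 P2.
have HM : maxover (Pihat X n i) (Gamhat X n i k bh) =
    Num.max (eps X n i (bh k)) (epss X n i (bh (k+1))).
  apply: maxover_eq.
  - by rewrite /Pihat -size_eq0 size_cat size_map -lt0n addn_gt0 lt0n size_eq0 P1.
  - move=> x; rewrite mem_cat => /orP [] /mapP [y ys ->] /=.
    + exact/mleft/(maxover_ge (Gam X n i (bh k)) ys).
    + exact/mright/(maxover_ge (Gams X n i (bh (k+1))) ys).
  - case: (lerP (eps X n i (bh k)) (epss X n i (bh (k+1)))) => h.
    + case: (maxover_att (Gams X n i (bh (k+1))) P2) => y ys fy.
      exists (inr y); first by rewrite mem_cat map_f ?orbT.
      by rewrite /= fy.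
    + case: (maxover_att (Gam X n i (bh k)) P1) => y ys fy.
      exists (inl y); first by rewrite mem_cat map_f.
      by rewrite /= fy.
by rewrite /argmaxers HM filter_cat !filter_map.
Qed.



Lemma sum_one (r : seq nat) (F : nat -> int) j : j \in r -> uniq r ->
  (forall k, k \in r -> k != j -> F k = 0) -> \sum_(k <- r) F k = F j.
Proof.
move=> jr ur H; rewrite (bigD1_seq j) //= big1_seq ?addr0 // => k /andP [kj kr].
exact: H.
Qed.

Lemma tele (f : nat -> int) a L : \sum_(c <- iota a L) (f c.+1 - f c) = f (a + L)%N - f a.
Proof.
elim: L a => [|L IH] a; first by rewrite big_nil addn0 subrr.


rewrite /= big_cons IH addSnnS; lia.
Qed.

Lemma sum_tele (F f : nat -> int) a L :
  (forall c, (a <= c < a + L)%N -> F c = f c.+1 - f c) ->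
  \sum_(c <- iota a L) F c = f (a + L)%N - f a.
Proof.
move=> H; rewrite -tele; apply: eq_big_seq => c; rewrite mem_iota; exact: H.
Qed.

Definition UP (X : ctype) (n t : nat) (g : nat -> int) : int :=
  match X with
  | TD => if (t.+3 <= n)%N then - g t.+1 else if t.+2 == n then - g t.+1 - g n else 0
  | _ => if (t < n)%N then - g t.+1 else 0
  end.
Definition LOW (X : ctype) (n t : nat) (g : nat -> int) : int :=
  match X with
  | TA => if (2 <= t)%N then - g t.-1 else 0
  | TB => if (2 <= t)%N then (if t == n then -2 else -1) * g t.-1 else 0
  | TD => if t == n then - g (n - 2)%N else if (2 <= t)%N && (t < n)%N then - g t.-1 else 0
  end.

Ltac cart := rewrite /cartan; repeat (case: ifP => ?); rewrite ?mul0r ?mulN1r //; try lia.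

Lemma up_eq X n t g : admissible X n -> (1 <= t <= n)%N ->
  \sum_(k <- iota t.+1 (n - t)) cartan X n t k * g k = UP X n t g.
Proof.
move=> HX /andP [t1 tn].
have Hgen : (t.+1 < n.+1)%N -> (forall k, (t.+1 < k <= n)%N -> cartan X n t k * g k = 0) ->
    \sum_(k <- iota t.+1 (n - t)) cartan X n t k * g k = cartan X n t t.+1 * g t.+1.
  move=> h H; apply: sum_one; rewrite ?iota_uniq ?mem_iota //; first lia.
  move=> k; rewrite mem_iota => kr kj; apply: H; lia.
case: X HX Hgen => /= HX Hgen.
- case: ifP => h.
  + rewrite Hgen; [cart|lia|move=> k hk; cart].
  + have -> : (n - t = 0)%N by lia. by rewrite big_nil.
- case: ifP => h.
  + rewrite Hgen; [cart|lia|move=> k hk; cart].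
  + have -> : (n - t = 0)%N by lia. by rewrite big_nil.
- case: ifP => h.
  + rewrite Hgen; [cart|lia|move=> k hk; cart].
  + case: ifP => h2.
    * have En : n = t.+2 by lia.
      have -> : (n - t = 2)%N by lia.
      rewrite /= !big_cons big_nil addr0 -En.
      have -> : cartan TD n t t.+1 = -1 by cart.
      have -> : cartan TD n t n = -1 by cart.
      by rewrite !mulN1r.
    * case: (ltnP t n) => h3.
      - have -> : (n - t = 1)%N by lia.
        rewrite /= big_cons big_nil addr0.
        have -> : cartan TD n t t.+1 = 0 by cart.
        by rewrite mul0r.
      - have -> : (n - t = 0)%N by lia. by rewrite big_nil.
Qed.

Lemma low_eq X n t g : admissible X n -> (1 <= t <= n)%N ->
  \sum_(k <- iota 1 t.-1) cartan X n t k * g k = LOW X n t g.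
Proof.
move=> HX /andP [t1 tn].
have Hgen : forall j, (1 <= j < t)%N -> (forall k, (1 <= k < t)%N -> k != j -> cartan X n t k * g k = 0) ->
    \sum_(k <- iota 1 t.-1) cartan X n t k * g k = cartan X n t j * g j.
  move=> j h H; apply: sum_one; rewrite ?iota_uniq ?mem_iota //; first lia.
  move=> k; rewrite mem_iota => kr kj; apply: H => //; lia.
have Hnil : t = 1%N -> \sum_(k <- iota 1 t.-1) cartan X n t k * g k = 0.
  by move=> ->; rewrite big_nil.
case: X HX Hgen Hnil => /= HX Hgen Hnil.
- case: ifP => h.
  + rewrite (Hgen t.-1); [cart|lia|move=> k hk kj; cart].
  + rewrite Hnil //; lia.
- case: ifP => h.
  + rewrite (Hgen t.-1); [cart|lia|move=> k hk kj; cart].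
  + rewrite Hnil //; lia.
- case: ifP => h.
  + rewrite (Hgen (n - 2)%N); [cart|lia|move=> k hk kj; cart].
  + case: ifP => h2.
    * rewrite (Hgen t.-1); [cart|lia|move=> k hk kj; cart].
    * rewrite Hnil //; lia.
Qed.

Lemma beta_eq X n b s t : admissible X n -> (1 <= t <= n)%N ->
  beta X n b s t = b s t + UP X n t (b s) + LOW X n t (b s.+1) + b s.+1 t.
Proof. by move=> HX Ht; rewrite /beta up_eq // low_eq. Qed.

Lemma betas_eq X n b s t : admissible X n -> (1 <= t <= n)%N ->
  betas X n b s t = b s.-1 t + UP X n t (b s.-1) + LOW X n t (b s) + b s t.
Proof. by move=> HX Ht; rewrite /betas up_eq // low_eq. Qed.


Lemma ftil_val X n j b s t : (1 <= j <= n)%N -> (1 <= mi X n j b <= len X n j)%N ->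
  ftil X n j b s t = b s t + (if (s == mi X n j b) && (t == j) then 1 else 0).
Proof.
move=> Hj Hm; rewrite /ftil /vadd /vsum; congr (_ + _).
rewrite /cells /= cats0 !big_map.
rewrite (@sum_tele _ (fun c => evec X n c j s t)); last by move=> c _; rewrite /vv /Tidx.
rewrite /evec /= add0n.
have -> : inI X n (mi X n j b) j by rewrite /inI Hj Hm.
rewrite andbT /inI /=; by case: ifP; rewrite ?andbF subr0.
Qed.

Lemma Gam_split X n j b l : (1 <= l <= len X n j)%N ->
  Gam X n j b l = beta X n b l j + (if (l < len X n j)%N then Gam X n j b l.+1 else 0).
Proof.
move=> Hl; rewrite /Gam; case: ltnP => h.
- have -> : (len X n j - l = (len X n j - l.+1).+1)%N by lia.
  by rewrite /= big_cons.
- have -> : (len X n j - l = 0)%N by lia.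
  by rewrite /= big_cons big_nil addr0.
Qed.

Lemma hlp (a M M' : int) : M = M' -> a + M != M' -> a + M <= M' -> a < 0.
Proof. move=> ->; lia. Qed.

Lemma mi_prop X n j b : admissible X n -> (1 <= j <= n)%N ->
  (1 <= mi X n j b <= len X n j)%N /\ ((2 <= mi X n j b)%N -> beta X n b (mi X n j b).-1 j < 0).
Proof.
move=> HX Hj.
have P1 := Pi_nil HX Hj.
have AL := argmaxers_nil (Gam X n j b) P1.
set L := argmaxers _ _ in AL.
have hm := has_min_nat AL.
have Hmem : mi X n j b \in L by rewrite /mi /least mem_nth // -has_find.
have Hall : all (fun y => mi X n j b <= y)%N L by rewrite /mi /least; exact: (nth_find 0%N hm).
move: Hmem; rewrite mem_filter => /andP [/eqP Hmax Hin].
have Hr : (1 <= mi X n j b <= len X n j)%N by move: Hin; rewrite /Pi mem_iota; lia.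
split=> // h2.
set m := mi X n j b in Hmax Hall Hr h2 *.
have Hin' : m.-1 \in Pi X n j by rewrite /Pi mem_iota; lia.
have Hne : Gam X n j b m.-1 != maxover (Pi X n j) (Gam X n j b).
  apply/negP => /eqP e.
  have : m.-1 \in L by rewrite mem_filter Hin' e eqxx.
  move/(allP Hall); lia.
have Hle := maxover_ge (Gam X n j b) Hin'.
have Hs := @Gam_split X n j b m.-1 ltac:(lia).
have e1 : (m.-1).+1 = m by lia.
have e2 : (m.-1 < len X n j)%N by lia.
rewrite e2 e1 in Hs.
move: Hne Hle; rewrite Hs Hmax; exact: (hlp (erefl _)).
Qed.


Definition supp X n (b : vec) := forall s t, ~~ inI X n s t -> b s t = 0.
Definition nonneg (b : vec) := forall s t, 0 <= b s t.
Definition InvT X n (b : vec) : Prop :=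
  match X with
  | TA => forall s t, (1 <= s)%N -> (2 <= t)%N -> b s.+1 t.-1 <= b s t
  | TB => (forall s t, (1 <= s)%N -> (2 <= t <= n)%N -> b s.+1 t.-1 <= b s t) /\
          (forall s t, (1 <= t)%N -> (t < n)%N -> (n < s + t)%N -> b s t.+1 <= b s t)
  | TD => (forall s t, (1 <= s)%N -> (2 <= t)%N -> (t + 2 <= n)%N -> b s.+1 t.-1 <= b s t) /\
          (forall s, (1 <= s)%N -> b s.+1 (n - 2)%N <= b s n.-1 + b s n) /\
          (forall s, (1 <= s)%N -> b s.+1 n.-1 <= b s n) /\
          (forall s, (1 <= s)%N -> b s.+1 n <= b s n.-1) /\
          (forall s t, (1 <= t)%N -> (t + 3 <= n)%N -> (n <= s + t)%N -> b s t.+1 <= b s t) /\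
          (forall s, (2 <= s)%N -> b s n.-1 + b s n <= b s (n - 2)%N)
  end.
Definition Inv X n b := [/\ supp X n b, nonneg b & InvT X n b].

Ltac lnk b x y x' y' := let H := fresh "L" in have H : x = x' -> y = y' -> b x y = b x' y' by move=> ? ?; apply: (congr2 b).

Definition dl (m j s t : nat) : int := if (s == m) && (t == j) then 1 else 0.

Lemma stepA n b b' m j : admissible TA n -> (1 <= j <= n)%N -> (1 <= m <= len TA n j)%N ->
  ((2 <= m)%N -> b m.-1 j + UP TA n j (b m.-1) + LOW TA n j (b m) + b m j < 0) ->
  supp TA n b -> nonneg b -> InvT TA n b ->
  (forall s t, b' s t = b s t + dl m j s t) -> InvT TA n b'.
Proof.
move=> HX Hj Hm Hb Hs Hn HA Hv s t h1 h2; rewrite !Hv; rewrite /len /= in Hm.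
have i0 := HA s t h1 h2; have i1 := HA m.-1 j; have i2 := Hn m.-1 j.
lnk b s.+1 t.-1 m j. lnk b s t m.-1 j.+1. lnk b m.-1.+1 j.-1 m j.-1.
move: Hb; rewrite /UP /LOW /dl /=; repeat (case: ifP => ?); lia.
Qed.

Lemma stepB1 n b b' m j : admissible TB n -> (1 <= j <= n)%N -> (1 <= m <= len TB n j)%N ->
  ((2 <= m)%N -> b m.-1 j + UP TB n j (b m.-1) + LOW TB n j (b m) + b m j < 0) ->
  nonneg b -> InvT TB n b ->
  (forall s t, b' s t = b s t + dl m j s t) ->
  (forall s t, (1 <= s)%N -> (2 <= t <= n)%N -> b' s.+1 t.-1 <= b' s t).
Proof.
move=> HX Hj Hm Hb Hn [F1 F2] Hv; rewrite /len /= in Hm.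
move=> s t h1 h2; rewrite !Hv /dl.
have i0 := F1 s t h1 h2.
case: ifP => E; last by case: ifP => _; lia.
have -> : (s == m) && (t == j) = false by apply/negbTE; move: E; lia.
have i1 := F1 m.-1 j; have i2 := Hn m.-1 j.
lnk b s.+1 t.-1 m j. lnk b s t m.-1 j.+1. lnk b m.-1.+1 j.-1 m j.-1.
have := L ltac:(lia) ltac:(lia); have := L0 ltac:(lia) ltac:(lia); have := L1 ltac:(lia) ltac:(lia).
have := Hb ltac:(lia).
clear F1 F2 Hv Hb L L0 L1.
rewrite /UP /LOW /=; repeat (case: ifP => ?); lia.
Qed.

Lemma stepB2 n b b' m j : admissible TB n -> (1 <= j <= n)%N -> (1 <= m <= len TB n j)%N ->
  ((2 <= m)%N -> b m.-1 j + UP TB n j (b m.-1) + LOW TB n j (b m) + b m j < 0) ->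
  nonneg b -> InvT TB n b ->
  (forall s t, b' s t = b s t + dl m j s t) ->
  (forall s t, (1 <= t)%N -> (t < n)%N -> (n < s + t)%N -> b' s t.+1 <= b' s t).
Proof.
move=> HX Hj Hm Hb Hn [F1 F2] Hv; rewrite /len /= in Hm.
move=> s t h1 h2 h3; rewrite !Hv /dl.
have i0 := F2 s t h1 h2 h3.
case: ifP => E; last by case: ifP => _; lia.
have -> : (s == m) && (t == j) = false by apply/negbTE; move: E; lia.
have i1 := F2 m.-1 j; have i2 := F1 m.-1 n; have i3 := Hn m.-1 j.
lnk b s t.+1 m j. lnk b s t m j.-1. lnk b m.-1.+1 n.-1 m j.-1. lnk b m.-1 n m.-1 j.
have := L ltac:(lia) ltac:(lia); have := L0 ltac:(lia) ltac:(lia).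
have := Hb ltac:(lia).
clear F1 F2 Hv Hb L L0.
rewrite /UP /LOW /=; repeat (case: ifP => ?); lia.
Qed.

Section SD.
Variables (n : nat) (b b' : vec) (m j : nat).
Hypotheses (HX : admissible TD n) (Hj : (1 <= j <= n)%N) (Hm : (1 <= m <= len TD n j)%N)
  (Hb : (2 <= m)%N -> b m.-1 j + UP TD n j (b m.-1) + LOW TD n j (b m) + b m j < 0)
  (Hn : nonneg b) (HI : InvT TD n b) (Hv : forall s t, b' s t = b s t + dl m j s t).

Lemma stepD1 s t : (1 <= s)%N -> (2 <= t)%N -> (t + 2 <= n)%N -> b' s.+1 t.-1 <= b' s t.
Proof.
case: HI => [D1 _]; move: Hm HX; rewrite /len /= => Hm' HX'.
move=> h1 h2 h3; rewrite !Hv /dl.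
have i0 := D1 s t h1 h2 h3.
case: ifP => E; last by case: ifP => _; lia.
have -> : (s == m) && (t == j) = false by apply/negbTE; move: E; lia.
have i1 := D1 m.-1 j; have i2 := Hn m.-1 j.
lnk b s.+1 t.-1 m j. lnk b s t m.-1 j.+1. lnk b m.-1.+1 j.-1 m j.-1.
have := L ltac:(lia) ltac:(lia); have := L0 ltac:(lia) ltac:(lia); have := L1 ltac:(lia) ltac:(lia).
have := Hb ltac:(lia).
clear L L0 L1 D1.
rewrite /UP /LOW /=; repeat (case: ifP => ?); lia.
Qed.

Lemma stepD2 s : (1 <= s)%N -> b' s.+1 (n - 2)%N <= b' s n.-1 + b' s n.
Proof.
case: HI => [D1 [D2 _]]; move: Hm HX; rewrite /len /= => Hm' HX'.
move=> h1; rewrite !Hv /dl.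
have i0 := D2 s h1.
case: ifP => E; last by do 2 case: ifP => _; lia.
have -> : (s == m) && (n.-1 == j) = false by apply/negbTE; move: E; lia.
have -> : (s == m) && (n == j) = false by apply/negbTE; move: E; lia.
have i1 := D1 m.-1 j ltac:(lia) ltac:(lia) ltac:(lia).
lnk b s.+1 (n - 2)%N m j. lnk b s n.-1 m.-1 j.+1. lnk b s n m.-1 n. lnk b m.-1.+1 j.-1 m j.-1.
have := L ltac:(lia) ltac:(lia); have := L0 ltac:(lia) ltac:(lia); have := L1 ltac:(lia) ltac:(lia);
have := L2 ltac:(lia) ltac:(lia).
have := Hb ltac:(lia).
clear L L0 L1 L2 D1 D2.
rewrite /UP /LOW /=; repeat (case: ifP => ?); lia.
Qed.

Lemma stepD3 s : (1 <= s)%N -> b' s.+1 n.-1 <= b' s n.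
Proof.
case: HI => [D1 [D2 [D3 _]]]; move: Hm HX; rewrite /len /= => Hm' HX'.
move=> h1; rewrite !Hv /dl.
have i0 := D3 s h1.
case: ifP => E; last by case: ifP => _; lia.
have -> : (s == m) && (n == j) = false by apply/negbTE; move: E; lia.
have i1 := D2 m.-1 ltac:(lia).
lnk b s.+1 n.-1 m j. lnk b s n m.-1 n. lnk b m.-1.+1 (n - 2)%N m j.-1. lnk b m.-1 n.-1 m.-1 j.
have := L ltac:(lia) ltac:(lia); have := L0 ltac:(lia) ltac:(lia); have := L1 ltac:(lia) ltac:(lia);
have := L2 ltac:(lia) ltac:(lia).
have := Hb ltac:(lia).
clear L L0 L1 L2 D1 D2 D3.
rewrite /UP /LOW /=; repeat (case: ifP => ?); lia.
Qed.

Lemma stepD4 s : (1 <= s)%N -> b' s.+1 n <= b' s n.-1.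
Proof.
case: HI => [D1 [D2 [D3 [D4 _]]]]; move: Hm HX; rewrite /len /= => Hm' HX'.
move=> h1; rewrite !Hv /dl.
have i0 := D4 s h1.
case: ifP => E; last by case: ifP => _; lia.
have -> : (s == m) && (n.-1 == j) = false by apply/negbTE; move: E; lia.
have i1 := D2 m.-1 ltac:(lia).
lnk b s.+1 n m j. lnk b s n.-1 m.-1 n.-1. lnk b m.-1 j m.-1 n. lnk b m.-1.+1 (n - 2)%N m (n - 2)%N.
have := L ltac:(lia) ltac:(lia); have := L0 ltac:(lia) ltac:(lia); have := L1 ltac:(lia) ltac:(lia);
have := L2 ltac:(lia) ltac:(lia).
have := Hb ltac:(lia).
clear L L0 L1 L2 D1 D2 D3 D4.
rewrite /UP /LOW /=; repeat (case: ifP => ?); lia.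
Qed.

Lemma stepD5 s t : (1 <= t)%N -> (t + 3 <= n)%N -> (n <= s + t)%N -> b' s t.+1 <= b' s t.
Proof.
case: HI => [D1 [D2 [D3 [D4 [D5 D6]]]]]; move: Hm HX; rewrite /len /= => Hm' HX'.
move=> h1 h2 h3; rewrite !Hv /dl.
have i0 := D5 s t h1 h2 h3.
case: ifP => E; last by case: ifP => _; lia.
have -> : (s == m) && (t == j) = false by apply/negbTE; move: E; lia.
have i1 := D5 m.-1 j; have i2 := D6 m.-1.
lnk b s t.+1 m j. lnk b s t m j.-1. lnk b m.-1 n.-1 m.-1 j.+1. lnk b m.-1 (n - 2)%N m.-1 j.
have := L ltac:(lia) ltac:(lia); have := L0 ltac:(lia) ltac:(lia).
have := Hb ltac:(lia).
clear L L0 D1 D2 D3 D4 D5 D6.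
rewrite /UP /LOW /=; repeat (case: ifP => ?); lia.
Qed.

Lemma stepD6 s : (2 <= s)%N -> b' s n.-1 + b' s n <= b' s (n - 2)%N.
Proof.
case: HI => [D1 [D2 [D3 [D4 [D5 D6]]]]]; move: Hm HX; rewrite /len /= => Hm' HX'.
move=> h1; rewrite !Hv /dl.
have i0 := D6 s h1.
case: ifP => E.
- have -> : (s == m) && (n == j) = false by apply/negbTE; move: E; lia.
  have -> : (s == m) && ((n - 2)%N == j) = false by apply/negbTE; move: E; lia.
  have i1 := D4 m.-1 ltac:(lia).
  lnk b s n.-1 m j. lnk b s (n - 2)%N m j.-1. lnk b s n m.-1.+1 n. lnk b m.-1 n.-1 m.-1 j.
  have := L ltac:(lia) ltac:(lia); have := L0 ltac:(lia) ltac:(lia); have := L1 ltac:(lia) ltac:(lia);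
  have := L2 ltac:(lia) ltac:(lia).
  have := Hb ltac:(lia).
  clear L L0 L1 L2 D1 D2 D3 D4 D5 D6.
  rewrite /UP /LOW /=; repeat (case: ifP => ?); lia.
case: ifP => E2; last by case: ifP => _; lia.
have -> : (s == m) && ((n - 2)%N == j) = false by apply/negbTE; move: E2; lia.
have i1 := D3 m.-1 ltac:(lia).
lnk b s n m j. lnk b s (n - 2)%N m (n - 2)%N. lnk b s n.-1 m.-1.+1 n.-1. lnk b m.-1 n m.-1 j.
have := L ltac:(lia) ltac:(lia); have := L0 ltac:(lia) ltac:(lia); have := L1 ltac:(lia) ltac:(lia);
have := L2 ltac:(lia) ltac:(lia).
have := Hb ltac:(lia).
clear L L0 L1 L2 D1 D2 D3 D4 D5 D6.
rewrite /UP /LOW /=; repeat (case: ifP => ?); lia.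
Qed.
End SD.

Lemma Inv_step X n j b : admissible X n -> (1 <= j <= n)%N -> Inv X n b -> Inv X n (ftil X n j b).
Proof.
move=> HX Hj [Hs Hn HI].
have [Hm Hb] := mi_prop b HX Hj.
have Hv : forall s t, ftil X n j b s t = b s t + dl (mi X n j b) j s t.
  by move=> s t; rewrite ftil_val.
have Hb' : (2 <= mi X n j b)%N -> b (mi X n j b).-1 j + UP X n j (b (mi X n j b).-1)
    + LOW X n j (b (mi X n j b)) + b (mi X n j b) j < 0.
  move=> h; have := Hb h; rewrite beta_eq // prednK //; lia.
move: (ftil X n j b) (mi X n j b) Hm Hb' Hv => b' m Hm Hb' Hv {Hb}.
split.
- move=> s t hI; rewrite Hv Hs // /dl; case: ifP => // /andP [/eqP e1 /eqP e2].
  by move: hI; rewrite e1 e2 /inI Hj Hm.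
- move=> s t; rewrite Hv /dl; have := Hn s t; case: ifP => _; lia.
case: X HX Hs HI Hm Hb' Hv => HX Hs HI Hm Hb' Hv /=.
- exact: (stepA HX Hj Hm Hb' Hs Hn HI Hv).
- split; [exact: (stepB1 HX Hj Hm Hb' Hn HI Hv)|exact: (stepB2 HX Hj Hm Hb' Hn HI Hv)].
- split; first by apply: stepD1; eassumption.
  split; first by apply: stepD2; eassumption.
  split; first by apply: stepD3; eassumption.
  split; first by apply: stepD4; eassumption.
  split; first by apply: stepD5; eassumption.
  by apply: stepD6; eassumption.
Qed.

Lemma Inv0 X n : Inv X n vzero.
Proof.
split => //; case: X => /=; rewrite /vzero //; repeat split; lia.
Qed.

Lemma Binf_Inv X n b : admissible X n -> Binf X n b -> Inv X n b.
Proof.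
move=> HX; elim=> [|i b' Hi _ IH]; first exact: Inv0.
exact: Inv_step.
Qed.

Lemma L1 X n i b : admissible X n -> (1 <= i <= n)%N -> Binf X n b -> 0 <= eps X n i b.
Proof.
move=> HX Hi /(Binf_Inv HX) [Hs Hn HI].
have Hl : (1 <= len X n i)%N by case: X HX {HI Hs} => /=; lia.
have Hin : len X n i \in Pi X n i by rewrite /Pi mem_iota; lia.
apply: le_trans (maxover_ge (Gam X n i b) Hin).
rewrite Gam_split ?ltnn ?addr0 ?beta_eq //; last lia.
have s1 := Hs (len X n i) i.+1; have s2 := Hs (len X n i).+1 i; have s3 := Hs (len X n i).+1 i.-1.
have s4 := Hs (len X n i).+1 (n - 2)%N.
have n1 := Hn (len X n i) i.
move: s1 s2 s3 s4 n1; rewrite /inI.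
case: X HX HI {Hl Hin Hs} => /= HX HI s1 s2 s3 s4 n1.
- have i1 := HI (n.+1 - i)%N i. rewrite /UP /LOW; repeat (case: ifP => ?); lia.
- case: HI => [F1 F2]; have i1 := F2 n i.
  rewrite /UP /LOW; repeat (case: ifP => ?); lia.
- case: HI => [D1 [D2 [D3 [D4 [D5 D6]]]]]; have i1 := D5 n.-1 i; have i2 := D6 n.-1.
  lnk b n.-1 i.+1 n.-1 n.-1. lnk b n.-1 i n.-1 (n - 2)%N.
  rewrite /UP /LOW; repeat (case: ifP => ?); lia.
Qed.

Lemma sum_cells (F : nat * nat -> int) mu : \sum_(c <- cells mu) F c =
  \sum_(r <- iota 0 (size mu)) \sum_(c <- iota 0 (nth 0%N mu r)) F (r.+1, c.+1).
Proof. by rewrite /cells big_flatten /= big_map; apply: eq_bigr => r _; rewrite big_map. Qed.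

Lemma Gams_row X n i b : admissible X n -> (1 <= i <= n)%N -> isStair X n i = false ->
  supp X n b -> Gams X n i b [:: i] = b i 1%N.
Proof.
move=> HX Hi Hst Hs.
rewrite /Gams /cells /= cats0 big_map.
rewrite (@sum_tele _ (fun c => b c (i.+1 - c)%N - b c (i - c)%N)); last first.
  move=> c hc.
  have -> : Tscoef X n i (1%N, c.+1) = 1 by rewrite /Tscoef; move: Hst; case: (X) => //= ->.
  rewrite /Tsidx Hst /= mul1r.
  have Hu : (1 <= i - c <= n)%N by lia.
  rewrite subSS betas_eq //.
  have s1 := Hs c (i - c).+1; have s2 := Hs c n; have s3 := Hs c.+1 (i - c).-1; have s4 := Hs c (i - c)%N.
  lnk b c (i - c).+1 c (i.+1 - c)%N. lnk b c.+1 (i - c).-1 c.+1 (i - c.+1)%N.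
  move: s1 s2 s3 s4; rewrite /inI.
  case: X HX Hst {Hs} => /= HX Hst; rewrite /UP /LOW; repeat (case: ifP => ?); lia.
have s1 := Hs 0%N (i.+1 - 0)%N; have s2 := Hs 0%N (i - 0)%N; have s3 := Hs (0 + i)%N (i - (0 + i))%N.
move: s1 s2 s3; rewrite /inI; lnk b (0 + i)%N (i.+1 - (0 + i))%N i 1%N.
lia.
Qed.

Lemma nth_rev_iota k r : (r < k)%N -> nth 0%N (rev (iota 1 k)) r = (k - r)%N.
Proof.
move=> h; rewrite nth_rev ?size_iota // nth_iota; lia.
Qed.

Lemma GamsB_row n b r : admissible TB n -> supp TB n b -> (r < n)%N ->
  \sum_(c <- iota 0 (n - r)) Tscoef TB n n (r.+1, c.+1) *
     betas TB n b (Tsidx TB n n (r.+1, c.+1)).1 (Tsidx TB n n (r.+1, c.+1)).2 =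
  (2 * b n r.+1 - b r.+1 n) - (2 * b n r - b r n).
Proof.
move=> HX Hs hr; have HX' : (2 <= n)%N := HX.
have -> : (n - r = (n - r.+1).+1)%N by lia.
rewrite /= big_cons.
rewrite (@sum_tele _ (fun x => 2 * (b (r + x)%N (n.+1 - x)%N - b (r + x)%N (n - x)%N))); last first.
  move=> c hc.
  rewrite /Tscoef /Tsidx /= eqxx /=.
  have -> : (c.+1 == 1%N) = false by apply/negbTE/eqP; lia.
  have -> : (1 < c.+1)%N by lia.
  rewrite /= betas_eq //=; last lia.
  have s1 := Hs (r + c.+1)%N (n.+1 - c.+1)%N.-1.
  lnk b (r + c.+1)%N (n.+1 - c.+1)%N.-1 (r + c.+1)%N (n - c.+1)%N.
  lnk b (r + c.+1)%N.-1 (n.+1 - c.+1)%N.+1 (r + c)%N (n.+1 - c)%N.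
  lnk b (r + c.+1)%N.-1 (n.+1 - c.+1)%N (r + c)%N (n - c)%N.
  move: s1; rewrite /inI /UP /LOW; repeat (case: ifP => ?); lia.
rewrite /Tscoef /Tsidx /= eqxx /= mul1r betas_eq //; last lia.
lnk b (r + (1 + (n - r.+1)))%N (n.+1 - (1 + (n - r.+1)))%N n r.+1.
lnk b (r + (1 + (n - r.+1)))%N (n - (1 + (n - r.+1)))%N n r.
lnk b (r + 1)%N (n.+1 - 1)%N r.+1 n.
lnk b (r + 1)%N (n - 1)%N r.+1 n.-1.
rewrite /UP /LOW /=; repeat (case: ifP => ?); lia.
Qed.

Lemma GamsB n b : admissible TB n -> supp TB n b ->
  Gams TB n n b (rev (iota 1 n)) = b n n.
Proof.
move=> HX Hs; have HX' : (2 <= n)%N := HX.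
rewrite /Gams sum_cells size_rev size_iota.
rewrite (@sum_tele _ (fun x => 2 * b n x - b x n)); last first.
  by move=> r hr; rewrite nth_rev_iota; [exact: GamsB_row | lia].
have s1 := Hs n 0%N; have s2 := Hs 0%N n.
lnk b n (0 + n)%N n n. lnk b (0 + n)%N n n n.
move: s1 s2; rewrite /inI /=; lia.
Qed.

Definition psi (i n s : nat) : nat := if odd s == (i == n.-1) then n.-1 else n.
Definition psi' (i n s : nat) : nat := if odd s == (i == n.-1) then n else n.-1.
Lemma psiS i n s : psi i n s.+1 = psi' i n s.
Proof. by rewrite /psi /psi' /=; case: (odd s); case: (i == n.-1). Qed.

Lemma UPD2 n g : (4 <= n)%N -> UP TD n (n - 2)%N g = - g n.-1 - g n.
Proof.
move=> h; rewrite /UP.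
have -> : ((n - 2)%N.+3 <= n)%N = false by apply/negbTE; lia.
have -> : ((n - 2)%N.+2 == n) by apply/eqP; lia.
by have -> : (n - 2)%N.+1 = n.-1 by lia.
Qed.
Lemma LOWD2 n g : (4 <= n)%N -> LOW TD n (n - 2)%N g = - g (n - 3)%N.
Proof.
move=> h; rewrite /LOW.
have -> : ((n - 2)%N == n) = false by apply/negbTE/eqP; lia.
have -> : (2 <= n - 2)%N && (n - 2 < n)%N by apply/andP; split; lia.
by have -> : (n - 2)%N.-1 = (n - 3)%N by lia.
Qed.
Lemma UPDtop n t g : (4 <= n)%N -> (n.-1 <= t)%N -> UP TD n t g = 0.
Proof.
move=> h ht; rewrite /UP.
have -> : (t.+3 <= n)%N = false by apply/negbTE; lia.
by have -> : (t.+2 == n) = false by apply/negbTE/eqP; lia.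
Qed.
Lemma LOWDn1 n g : (4 <= n)%N -> LOW TD n n.-1 g = - g (n - 2)%N.
Proof.
move=> h; rewrite /LOW.
have -> : (n.-1 == n) = false by apply/negbTE/eqP; lia.
have -> : (2 <= n.-1)%N && (n.-1 < n)%N by apply/andP; split; lia.
by have -> : (n.-1).-1 = (n - 2)%N by lia.
Qed.
Lemma LOWDn n g : LOW TD n n g = - g (n - 2)%N.
Proof. by rewrite /LOW eqxx. Qed.

Lemma GamsD_row n i b r : admissible TD n -> supp TD n b -> (i == n.-1) || (i == n) ->
  (r.+3 <= n)%N ->
  \sum_(c <- iota 0 (n.-1 - r)) Tscoef TD n i (r.+1, c.+1) *
     betas TD n b (Tsidx TD n i (r.+1, c.+1)).1 (Tsidx TD n i (r.+1, c.+1)).2 =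
  (b n.-1 r.+1 - b r.+1 (psi' i n r.+1)) - (b n.-1 r - b r (psi' i n r)).
Proof.
move=> HX Hs Hi hr; have HX' : (4 <= n)%N := HX.
have -> : (n.-1 - r = (n - r.+3).+2)%N by lia.
rewrite /= !big_cons.
rewrite (@sum_tele _ (fun x => b (r + x)%N (n - x)%N - b (r + x)%N (n - x.+1)%N)); last first.
  move=> c hc.
  rewrite /Tscoef /Tsidx /= Hi /=.
  have -> : (c.+1 == 1%N) = false by apply/negbTE/eqP; lia.
  rewrite mul1r betas_eq //=; last lia.
  have s1 := Hs (r + c.+1)%N (n - c.+1)%N.-1.
  lnk b (r + c.+1)%N (n - c.+1)%N.-1 (r + c.+1)%N (n - c.+2)%N.
  lnk b (r + c.+1)%N.-1 (n - c.+1)%N.+1 (r + c)%N (n - c)%N.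
  lnk b (r + c.+1)%N.-1 (n - c.+1)%N (r + c)%N (n - c.+1)%N.
  move: s1; rewrite /inI /UP /LOW; repeat (case: ifP => ?); lia.
rewrite /Tscoef /Tsidx /= Hi /= !mul1r.
rewrite !betas_eq //; try lia; last by case: ifP; lia.
rewrite UPD2 // LOWD2 //.
have -> : (r + 2).-1 = r.+1 by lia.
have -> : (r + (2 + (n - r.+3)))%N = n.-1 by lia.
have -> : (n - (2 + (n - r.+3)))%N = r.+1 by lia.
have -> : (n - (2 + (n - r.+3)).+1)%N = r by lia.
have -> : (r + 2)%N = r.+2 by lia.
rewrite /psi' /=; case: (odd r); case: (i == n.-1) => /=;
  lnk b r.+1 n.-2 r.+1 (n - 2)%N; repeat (case: ifP => ?); lia.
Qed.

Lemma GamsD n i b : admissible TD n -> supp TD n b -> (i == n.-1) || (i == n) ->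
  Gams TD n i b (rev (iota 1 n.-1)) = b n.-1 (psi i n n.-1).
Proof.
move=> HX Hs Hi; have HX' : (4 <= n)%N := HX.
rewrite /Gams sum_cells size_rev size_iota.
have -> : n.-1 = ((n - 2) + 1)%N by lia.
rewrite iotaD big_cat /= big_cons big_nil addr0.
rewrite (@sum_tele _ (fun x => b n.-1 x - b x (psi' i n x))); last first.
  move=> r hr; rewrite nth_rev_iota; last lia.
  have -> : ((n - 2 + 1) - r = n.-1 - r)%N by lia.
  apply: GamsD_row => //; lia.
rewrite nth_rev_iota; last lia.
have -> : ((n - 2 + 1) - (n - 2))%N = 1%N by lia.
rewrite /= big_cons big_nil addr0.
rewrite /Tscoef /Tsidx /= Hi /= mul1r betas_eq //; last by case: ifP; lia.
have s1 := Hs n.-1 0%N; have s2 := Hs 0%N n.-1; have s3 := Hs 0%N n.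
move: s1 s2 s3; rewrite /inI /= => s1 s2 s3.
rewrite !add0n addn1 psiS /psi' /=.
have -> : (n - 2).+1 = n.-1 by lia.
lnk b n.-1 (n.-1).-1 n.-1 (n - 2)%N.
case: (odd (n - 2)); case: (i == n.-1) => /=; rewrite /UP /LOW;
  repeat (case: ifP => ?); lia.
Qed.

Lemma L2 X n i b : admissible X n -> (1 <= i <= n)%N -> Binf X n b -> 0 <= epss X n i b.
Proof.
move=> HX Hi /(Binf_Inv HX) [Hs Hn HI].
case Hst: (isStair X n i).
- have Hin : rev (iota 1 (stsize X n)) \in Pis X n i.
    rewrite /Pis Hst mem_filter subseqs_self andbT -size_eq0 size_rev size_iota.
    by case: X HX Hst {Hs HI} => //= HX; lia.
  apply: le_trans (maxover_ge (Gams X n i b) Hin).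
  case: X HX Hst Hs HI {Hin} => //= HX Hst Hs HI.
  + by move/eqP: Hst => ->; rewrite GamsB.
  + by rewrite GamsD.
- have Hin : [:: i] \in Pis X n i by rewrite /Pis Hst map_f // mem_iota; lia.
  apply: le_trans (maxover_ge (Gams X n i b) Hin).
  by rewrite Gams_row.
Qed.

Unset Implicit Arguments.

Theorem theorem4p3 (X : ctype) (n : nat) (HX : admissible X n)
  (N : nat) (bh : hvec)
  (Hb : forall k : int, Binf X n (bh k))
  (Hsupp : forall k : int, N%:Z < `|k| -> bh k = vzero) :
  KP_wt X n N bh = comb_wt X n N bh /\
  (forall (i : nat) (k : int), (1 <= i <= n)%N ->
     [/\ KP_eps X n i k bh = comb_eps X n i k bh,
         KP_E X n i k bh = Some (comb_E X n i k bh) &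
         KP_F X n i k bh = Some (comb_F X n i k bh)]).
Proof.
split; first by [].
move=> i k Hi.
have P1 := Pi_nil HX Hi; have P2 := Pis_nil HX Hi.
have A0 := L1 HX Hi (Hb k); have B0 := L2 HX Hi (Hb (k+1)).
have AL := argmaxers_nil (Gam X n i (bh k)) P1.
have BL := argmaxers_nil (Gams X n i (bh (k+1))) P2.
have Ale : forall x, x \in Pi X n i -> Gam X n i (bh k) x <= eps X n i (bh k).
  by move=> x xs; apply: maxover_ge.
have Ble : forall x, x \in Pis X n i -> Gams X n i (bh (k+1)) x <= epss X n i (bh (k+1)).
  by move=> x xs; apply: maxover_ge.
split; first by [].
- rewrite /KP_E /KP_eps /comb_E /Mhat argmax_hat //.
  case: (ltrP (epss X n i (bh (k+1))) (eps X n i (bh k))) => h.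
  + rewrite (filter_nil_lt Ble h) G2 //.
    have -> : 0 < eps X n i (bh k) - epss X n i (bh (k+1)) by lia.
    rewrite /etil; have -> : (eps X n i (bh k) == 0) = false by apply/negbTE; lia.
    by [].
  + rewrite G3 //.
    have -> : (0 < eps X n i (bh k) - epss X n i (bh (k+1))) = false by apply/negbTE; lia.
    by [].
- rewrite /KP_F /KP_eps /comb_F /mhat argmax_hat //.
  case: (ltrP (eps X n i (bh k)) (epss X n i (bh (k+1)))) => h.
  + rewrite (filter_nil_lt Ale h) G4.
    have -> : (0 <= eps X n i (bh k) - epss X n i (bh (k+1))) = false by apply/negbTE; lia.
    rewrite /estil; have -> : (epss X n i (bh (k+1)) == 0) = false by apply/negbTE; lia.
    by [].
  + rewrite G1 //.
    have -> : 0 <= eps X n i (bh k) - epss X n i (bh (k+1)) by lia.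
    by [].
Qed.
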